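(* Let $n\ge1$, let $x$ be a vertex of $Q_n$ and $k_1,\dots,k_m<n$, and let $\mu = [x;\,k_1\dots k_ik_{i+1}\dots k_m]$. For some $i<m$, let $\nu = [x;\,k_1\dots k_{i-1}k_{i+1}k_ik_{i+2}\dots k_m]$ be the path obtained by swapping $k_i$ and $k_{i+1}$. (1) If $k_i\ne k_{i+1}$, then $p_\mu = -p_\nu$ in $C^\ast(Q_n)$. (2) If $k_i = k_{i+1}$, then $p_\mu = p_\nu$.
   Context: For $n\ge1$, identify integers $0\le i<2^n$ with their $n$-digit binary representations and let $i\#k$ be $i$ with its $k$-th digit flipped. The hypercube $Q_n$ has vertex classes $U_n$ (even number of $1$'s) and $V_n$ (odd number of $1$'s), with $i\in U_n$, $j\in V_n$ adjacent iff $j = i\#k$ for some $k<n$. $C^\ast(Q_n)$ is the universal unital C*-algebra generated by projections $p_x$ ($x\in U_n\cup V_n$) with $\sum_{u\in U_n}p_u = 1 = \sum_{v\in V_n}p_v$ and $p_up_v=0$ when $u\in U_n,v\in V_n$ are non-adjacent. For a vertex $x$ and indices $k_1,\dots,k_m<n$, $[x;\,k_1\dots k_m]$ denotes the path $x_1x_2\dots x_{m+1}$ with $x_1=x$ and $x_{r+1} = x_r\#k_r$; for a path $\mu = x_1\dots x_{m+1}$ one sets $p_\mu = p_{x_1}p_{x_2}\cdots p_{x_{m+1}}$. *)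

(* Defs.v *)
From HB Require Import structures.
From mathcomp Require Import all_boot all_order all_algebra.
From mathcomp Require Import reals.
From mathcomp Require Import complex.
Set Implicit Arguments. Unset Strict Implicit. Unset Printing Implicit Defensive.
Import Order.TTheory GRing.Theory Num.Theory.
Local Open Scope ring_scope.

Record is_Cstar (R : realType) (A : algType R[i]) (star : A -> A) (nrm : A -> R)
  : Prop := IsCstar {
  star_add : forall x y, star (x + y) = star x + star y;
  star_scale : forall (c : R[i]) x, star (c *: x) = (conjc c) *: star x;
  star_mul : forall x y, star (x * y) = star y * star x;
  star_invol : forall x, star (star x) = x;
  nrm_ge0 : forall x, 0 <= nrm x;
  nrm_eq0 : forall x, nrm x = 0 -> x = 0;
  nrm_triangle : forall x y, nrm (x + y) <= nrm x + nrm y;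
  nrm_scale : forall (c : R[i]) x, nrm (c *: x) = ComplexField.Normc.normc c * nrm x;
  nrm_submul : forall x y, nrm (x * y) <= nrm x * nrm y;
  nrm_cstar : forall x, nrm (star x * x) = nrm x ^+ 2;
  nrm_complete : forall u : nat -> A,
    (forall e : R, 0 < e -> exists N : nat, forall m k : nat,
        (N <= m)%N -> (N <= k)%N -> nrm (u m - u k) < e) ->
    exists l : A, forall e : R, 0 < e -> exists N : nat, forall m : nat,
        (N <= m)%N -> nrm (u m - l) < e
}.

Definition vertex (n : nat) := {ffun 'I_n -> bool}.

Definition flip (n : nat) (x : vertex n) (k : 'I_n) : vertex n :=
  [ffun j => if j == k then ~~ x j else x j].

Definition weight (n : nat) (x : vertex n) : nat := #|[set j | x j]|.

Definition inU (n : nat) (x : vertex n) : bool := ~~ odd (weight x).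
Definition inV (n : nat) (x : vertex n) : bool := odd (weight x).

Definition adjacent (n : nat) (u v : vertex n) : Prop := exists k : 'I_n, v = flip u k.

Definition Qn_relations (n : nat) (R : realType) (A : algType R[i])
  (star : A -> A) (p : vertex n -> A) : Prop :=
  [/\ (forall x, p x * p x = p x /\ star (p x) = p x),
      \sum_(u | inU u) p u = 1,
      \sum_(v | inV v) p v = 1 &
      (forall u v, inU u -> inV v -> ~ adjacent u v -> p u * p v = 0)].

(** The path [x; k_1 ... k_m] as the sequence of its vertices x_1 ... x_{m+1}. *)
Definition path_of (n : nat) (x : vertex n) (ks : seq 'I_n) : seq (vertex n) :=
  x :: scanl (@flip n) x ks.

Definition p_path (n : nat) (A : pzRingType) (p : vertex n -> A) (mu : seq (vertex n)) : A :=
  \prod_(y <- mu) p y.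

(* Main.v *)
Require Import Defs.
From HB Require Import structures.
From mathcomp Require Import all_boot all_order all_algebra.
From mathcomp Require Import reals complex.
Import Order.TTheory GRing.Theory Num.Theory.
Local Open Scope ring_scope.
Set Implicit Arguments. Unset Strict Implicit.
Import ComplexField.Normc.
Local Open Scope complex_scope.
Local Open Scope ring_scope.

Lemma star0 (R : realType) (A : algType R[i]) (star : A -> A) (nrm : A -> R)
  (HA : is_Cstar star nrm) : star 0 = 0.
Proof.
have := star_add HA 0 0; rewrite addr0 => /(congr1 (fun z => z - star 0)).
by rewrite subrr addrK => <-.
Qed.

Lemma starN (R : realType) (A : algType R[i]) (star : A -> A) (nrm : A -> R)
  (HA : is_Cstar star nrm) x : star (- x) = - star x.
Proof.
apply/eqP; rewrite -subr_eq0 opprK -(star_add HA) addNr.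
by rewrite (star0 HA).
Qed.

Lemma star1 (R : realType) (A : algType R[i]) (star : A -> A) (nrm : A -> R)
  (HA : is_Cstar star nrm) : star 1 = 1 :> A.
Proof.
have := star_mul HA 1 (star 1); rewrite mul1r (star_invol HA) mul1r.
by move=> <-.
Qed.

Lemma nrm_scale_nat (R : realType) (A : algType R[i]) (star : A -> A) (nrm : A -> R)
  (HA : is_Cstar star nrm) (x : A) m : nrm (x *+ m) = m%:R * nrm x.
Proof.
by rewrite -scaler_nat (nrm_scale HA) normcMn normc1.
Qed.

Lemma nrm_scale_invnat (R : realType) (A : algType R[i]) (star : A -> A) (nrm : A -> R)
  (HA : is_Cstar star nrm) (x : A) m : nrm ((m%:R)^-1 *: x) = (m%:R)^-1 * nrm x.
Proof.
by rewrite (nrm_scale HA) normcV normcMn normc1.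
Qed.

Lemma nrmN (R : realType) (A : algType R[i]) (star : A -> A) (nrm : A -> R)
  (HA : is_Cstar star nrm) (x : A) : nrm (- x) = nrm x.
Proof. by rewrite -scaleN1r (nrm_scale HA) normcN normc1 mul1r. Qed.

Lemma nrm_proj (R : realType) (A : algType R[i]) (star : A -> A) (nrm : A -> R)
  (HA : is_Cstar star nrm) (e : A) : e * e = e -> star e = e -> nrm e <= 1.
Proof.
move=> ee se; have := nrm_cstar HA e; rewrite se ee expr2 => h.
have [->|nz] := eqVneq (nrm e) 0; first by rewrite ler01.
have : nrm e = 1 by apply: (mulIf nz); rewrite mul1r -h.
by move->.
Qed.

Lemma nrm_mul_le1 (R : realType) (A : algType R[i]) (star : A -> A) (nrm : A -> R)
  (HA : is_Cstar star nrm) (x y : A) : nrm x <= 1 -> nrm y <= 1 -> nrm (x * y) <= 1.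
Proof.
move=> hx hy; apply: (le_trans (nrm_submul HA x y)).
by rewrite -[1]mul1r ler_pM // (nrm_ge0 HA).
Qed.

Lemma zmod_id4 (V : zmodType) (e y a b : V) :
  e + y + (y + b) + (e + a + (a - b)) = (e + (y + a)) *+ 2.
Proof.
rewrite mulr2n (addrA (e + y) y b) (addrA (e + a) a (- b)) addrACA subrr addr0.
by rewrite -(addrA e y y) -(addrA e a a) (addrACA e (y+y) e (a+a))
  (addrACA e (y+a) e (y+a)) (addrACA y a y a).
Qed.

Lemma corner_step0 (R : realType) (A : algType R[i]) (star : A -> A) (nrm : A -> R)
  (HA : is_Cstar star nrm) (e Y : A) :
  e * e = e -> e * Y = Y -> Y * e = Y -> nrm (e + Y) <= 1 -> nrm (e + 'i *: Y) <= 1 ->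
  nrm (e + (1 + 'i) *: Y) <= 1.
Proof.
move=> ee eY Ye h1 h2.
have ii : 'i * 'i = -1 :> R[i] by rewrite -expr2 sqr_i.
have id : (e + Y) * (e + Y) + (e + 'i *: Y) * (e + 'i *: Y) = (e + (1 + 'i) *: Y) *+ 2.
  rewrite !mulrDr !mulrDl ee eY Ye -!scalerAl -!scalerAr eY Ye scalerA ii scaleN1r.
  by rewrite scalerDl scale1r zmod_id4.
have := nrm_triangle HA ((e + Y) * (e + Y)) ((e + 'i *: Y) * (e + 'i *: Y)).
rewrite id (nrm_scale_nat HA) => hle.
have h3 : nrm (e + Y) * nrm (e + Y) + nrm (e + 'i *: Y) * nrm (e + 'i *: Y) <= 2%:R.
  by rewrite -[2%:R]/(1 + 1 : R) lerD // -[1]mul1r ler_pM // (nrm_ge0 HA).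
have := le_trans hle (lerD (nrm_submul HA _ _) (nrm_submul HA _ _)).
move=> /le_trans /(_ h3).
by rewrite -[X in _ <= X]mulr1 ler_pM2l.
Qed.

Lemma ii_eq (R : realType) : 'i * 'i = -1 :> R[i].
Proof. by rewrite -expr2 sqr_i. Qed.

Lemma corner_step (R : realType) (A : algType R[i]) (star : A -> A) (nrm : A -> R)
  (HA : is_Cstar star nrm) (e y : A) (c : R[i]) :
  e * e = e -> e * y = y -> y * e = y -> nrm (e + c *: y) <= 1 ->
  nrm (e + ('i * c) *: y) <= 1 -> nrm (e + ((1 + 'i) * c) *: y) <= 1.
Proof.
move=> ee ey ye h1 h2; rewrite -scalerA; rewrite -scalerA in h2.
apply: (corner_step0 HA) => //; first by rewrite -scalerAr ey.
by rewrite -scalerAl ye.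
Qed.

Lemma doubling (R : realType) (A : algType R[i]) (star : A -> A) (nrm : A -> R)
  (HA : is_Cstar star nrm) (e y : A) (c : R[i]) :
  e * e = e -> e * y = y -> y * e = y -> nrm (e + c *: y) <= 1 ->
  nrm (e + ('i * c) *: y) <= 1 -> nrm (e + (- 'i * c) *: y) <= 1 ->
  nrm (e + (2%:R * c) *: y) <= 1.
Proof.
move=> ee ey ye h1 h2 h3.
have e1 : 'i * (- 'i * c) = c by rewrite mulrA mulrN ii_eq opprK mul1r.
have s2 : (1 + 'i) * (1 + 'i) = 2%:R * 'i :> R[i].
  rewrite mulrDl !mulrDr !mul1r mulr1 ii_eq mulr_natl mulr2n.
  by rewrite (addrC 'i (-1)) addrACA subrr add0r.
have h1' : nrm (e + ('i * (- 'i * c)) *: y) <= 1 by rewrite e1.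
have g1 := corner_step HA ee ey ye h3 h1'.
have g2 := corner_step HA ee ey ye h1 h2.
have e2 : 'i * ((1 + 'i) * (- 'i * c)) = (1 + 'i) * c by rewrite mulrCA e1.
have g2' : nrm (e + ('i * ((1 + 'i) * (- 'i * c))) *: y) <= 1 by rewrite e2.
have g3 := corner_step HA ee ey ye g1 g2'.
suff <- : (1 + 'i) * ((1 + 'i) * (- 'i * c)) = 2%:R * c by [].
by rewrite mulrA s2 -mulrA e1.
Qed.

Lemma i_pow4 (R : realType) k : 'i ^+ k = 'i ^+ (k %% 4) :> R[i].
Proof.
rewrite {1}(divn_eq k 4) mulnC exprD exprM.
have -> : 'i ^+ 4 = 1 :> R[i] by rewrite (exprM _ 2 2) sqr_i sqrrN expr1n.
by rewrite expr1n mul1r.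
Qed.

Lemma doubling_all (R : realType) (A : algType R[i]) (star : A -> A) (nrm : A -> R)
  (HA : is_Cstar star nrm) (e y : A) :
  e * e = e -> e * y = y -> y * e = y ->
  nrm (e + y) <= 1 -> nrm (e - y) <= 1 ->
  nrm (e + 'i *: y) <= 1 -> nrm (e - 'i *: y) <= 1 ->
  forall r k, nrm (e + ((2 ^ r)%:R * 'i ^+ k) *: y) <= 1.
Proof.
move=> ee ey ye h1 h2 h3 h4; elim=> [|r IH] k.
  rewrite expn0 mul1r i_pow4.
  have : (k %% 4 < 4)%N by rewrite ltn_pmod.
  case: (k %% 4)%N => [|[|[|[|//]]]] _.
  - by rewrite expr0 scale1r.
  - by rewrite expr1.
  - by rewrite sqr_i scaleN1r.
  - by rewrite exprS sqr_i mulrN1 scaleNr.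
rewrite expnS natrM -mulrA; apply: (doubling HA) => //.
- by rewrite mulrCA -exprS IH.
- have -> : - 'i * ((2 ^ r)%:R * 'i ^+ k) = (2 ^ r)%:R * 'i ^+ (3 + k) :> R[i].
    by rewrite mulrCA exprD exprS sqr_i mulrN1 mulNr.
  exact: IH.
Qed.

Lemma zmod_id5 (V : zmodType) (e y b : V) :
  e + y + (y + b) + (e - y + (- y + b)) = (e + b) *+ 2.
Proof.
rewrite mulr2n (addrA (e + y) y b) (addrA (e - y) (- y) b).
rewrite (addrACA (e + y + y)) -(addrA e y y) -(addrA e (- y) (- y)).
by rewrite (addrACA e (y + y)) -opprD subrr addr0 addrACA.
Qed.

Lemma cstar_rot (R : realType) (A : algType R[i]) (star : A -> A) (nrm : A -> R)
  (HA : is_Cstar star nrm) (e y : A) (c : R[i]) :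
  e * e = e -> star e = e -> star y = y -> e * y = y -> y * e = y ->
  nrm (e + y) <= 1 -> nrm (e - y) <= 1 ->
  conjc c * c = 1 -> conjc c + c = 0 ->
  nrm (e + c *: y) <= 1.
Proof.
move=> ee se sy ey ye h1 h2 c1 c2.
have sz : star (e + c *: y) = e + conjc c *: y by rewrite (star_add HA) (star_scale HA) se sy.
have pz : star (e + c *: y) * (e + c *: y) = e + y * y.
  rewrite sz !mulrDr !mulrDl ee -!scalerAl -!scalerAr ey ye scalerA c1 scale1r.
  by rewrite addrA -(addrA e) -scalerDl c2 scale0r addr0.
have sq : (e + y) * (e + y) + (e - y) * (e - y) = (e + y * y) *+ 2.
  by rewrite !mulrDr !mulrDl ee mulrN mulNr mulrNN ey ye zmod_id5.
have hb : nrm (e + y * y) <= 1.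
  have := nrm_triangle HA ((e + y) * (e + y)) ((e - y) * (e - y)).
  rewrite sq (nrm_scale_nat HA) => hle.
  have h3 : nrm ((e + y) * (e + y)) + nrm ((e - y) * (e - y)) <= 2%:R.
    by rewrite -[2%:R]/(1 + 1 : R) lerD // (nrm_mul_le1 HA).
  have := le_trans hle h3.
  by rewrite -[X in _ <= X]mulr1 ler_pM2l.
have := nrm_cstar HA (e + c *: y); rewrite pz => h.
by rewrite -(expr_le1 (n := 2)) // ?(nrm_ge0 HA) // -h.
Qed.

Lemma conj_i (R : realType) : conjc ('i : R[i]) = - 'i.
Proof. by apply/eqP; simpc. Qed.

Lemma corner_zero (R : realType) (A : algType R[i]) (star : A -> A) (nrm : A -> R)
  (HA : is_Cstar star nrm) (e y : A) :
  e * e = e -> star e = e -> star y = y -> e * y = y -> y * e = y ->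
  nrm (e + y) <= 1 -> nrm (e - y) <= 1 -> y = 0.
Proof.
move=> ee se sy ey ye h1 h2.
have h3 : nrm (e + 'i *: y) <= 1.
  apply: (cstar_rot HA) => //; rewrite conj_i ?addNr //.
  by rewrite mulNr ii_eq opprK.
have h4 : nrm (e - 'i *: y) <= 1.
  have cni : conjc (- 'i : R[i]) = 'i by rewrite -conj_i conjcK.
  rewrite -scaleNr; apply: (cstar_rot HA) => //; rewrite cni ?addrN //.
  by rewrite mulrN ii_eq opprK.
have hr := doubling_all HA ee ey ye h1 h2 h3 h4.
have hb : forall r, (2 ^ r)%:R * nrm y <= 2%:R.
  move=> r; have := hr r 0%N; rewrite expr0 mulr1 => hr0.
  have -> : (2 ^ r)%:R * nrm y = nrm ((2 ^ r)%:R *: y).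
    by rewrite (nrm_scale HA) normcMn normc1.
  have -> : (2 ^ r)%:R *: y = (e + (2 ^ r)%:R *: y) + (- e) by rewrite addrC addKr.
  apply: (le_trans (nrm_triangle HA _ _)).
  rewrite -[2%:R]/(1 + 1 : R) lerD // (nrmN HA).
  exact: (nrm_proj HA).
apply: (nrm_eq0 HA).
have t0 := nrm_ge0 HA y.
apply/eqP; rewrite eq_le t0 andbT; apply/negP => /negP; rewrite -ltNge => tpos.
set N := Num.Def.archi_bound (2%:R / nrm y).
have hN : 2%:R / nrm y < N%:R by apply: archi_boundP; rewrite divr_ge0.
have hN2 : (N%:R : R) <= (2 ^ N)%:R by rewrite ler_nat ltnW // ltn_expl.
have := hb N; apply/negP; rewrite -ltNge.
rewrite -ltr_pdivrMr //.
exact: (lt_le_trans hN hN2).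
Qed.

Lemma nrm0 (R : realType) (A : algType R[i]) (star : A -> A) (nrm : A -> R)
  (HA : is_Cstar star nrm) : nrm 0 = 0.
Proof. by rewrite -(scale0r (0 : A)) (nrm_scale HA) normc0 mul0r. Qed.

Lemma nrm_sum (R : realType) (A : algType R[i]) (star : A -> A) (nrm : A -> R)
  (HA : is_Cstar star nrm) (I : Type) (r : seq I) (P : pred I) (F : I -> A) :
  nrm (\sum_(i <- r | P i) F i) <= \sum_(i <- r | P i) nrm (F i).
Proof.
elim/big_rec2: _ => [|i a b _ h]; first by rewrite (nrm0 HA).
apply: (le_trans (nrm_triangle HA _ _)); by rewrite lerD2l.
Qed.

Lemma starM3 (R : realType) (A : algType R[i]) (star : A -> A) (nrm : A -> R)
  (HA : is_Cstar star nrm) (e q : A) : star e = e -> star q = q ->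
  star (e * q * e) = e * q * e.
Proof. by move=> se sq; rewrite !(star_mul HA) se sq mulrA. Qed.

Lemma corner_bound (R : realType) (A : algType R[i]) (star : A -> A) (nrm : A -> R)
  (HA : is_Cstar star nrm) (e q : A) : e * e = e -> star e = e ->
  q * q = q -> star q = q -> nrm (e - e * q * e) <= 1.
Proof.
move=> ee se qq sq.
have sx : star ((1 - q) * e) = e * (1 - q).
  by rewrite (star_mul HA) (star_add HA) (starN HA) (star1 HA) se sq.
have q2 : (1 - q) * (1 - q) = 1 - q.
  by rewrite mulrBr mulr1 !mulrBl mul1r qq subrr subr0.
have hx : star ((1 - q) * e) * ((1 - q) * e) = e - e * q * e.
  by rewrite sx mulrA -(mulrA e) q2 mulrBr mulr1 mulrBl ee.
rewrite -hx (nrm_cstar HA) expr_le1 // ?(nrm_ge0 HA) //.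
apply: (nrm_mul_le1 HA); last exact: (nrm_proj HA).
apply: (nrm_proj HA) => //.
by rewrite (star_add HA) (starN HA) (star1 HA) sq.
Qed.

Lemma proj_orth (R : realType) (A : algType R[i]) (star : A -> A) (nrm : A -> R)
  (HA : is_Cstar star nrm) (T : finType) (p : T -> A) (S : pred T) :
  (forall x, p x * p x = p x /\ star (p x) = p x) -> \sum_(v | S v) p v = 1 ->
  forall u w, S u -> S w -> u != w -> p u * p w = 0.
Proof.
move=> hp hS u w Su Sw uw.
set e := p u; have [ee se] := hp u.
pose c v := e * p v * e.
have hsum : \sum_(v | S v) c v = e.
  by rewrite -mulr_suml -mulr_sumr hS mulr1 ee.
rewrite (bigD1 u) //= in hsum.
have cu : c u = e by rewrite /c ee ee.
rewrite cu in hsum.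
have s0 : \sum_(v | S v && (v != u)) c v = 0 by apply: (addrI e); rewrite addr0.
rewrite (bigD1 w) /= in s0; last by rewrite Sw eq_sym uw.
set D := \sum_(v | _) c v in s0.
have cwD : c w = - D by apply/eqP; rewrite -addr_eq0 s0.
set K := (\sum_(v | (S v && (v != u)) && (v != w)) 1)%N.
set N := K.+1.
have N0 : (N%:R : R[i]) != 0 by rewrite pnatr_eq0.
pose y := (N%:R : R[i])^-1 *: c w.
have hcb : forall v, nrm (e - c v) <= 1.
  by move=> v; have [pp sp] := hp v; exact: (corner_bound HA).
have ne : nrm e <= 1 by apply: (nrm_proj HA).
have ecw : e * c w = c w by rewrite /c !mulrA ee.
have cwe : c w * e = c w by rewrite /c -mulrA ee.
have ey : e * y = y by rewrite /y -scalerAr ecw.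
have ye : y * e = y by rewrite /y -scalerAl cwe.
have sy : star y = y.
  by rewrite /y (star_scale HA) conjc_inv conjc_nat (starM3 HA) // (hp w).2.
have sumK : \sum_(v | (S v && (v != u)) && (v != w)) e = e *+ K.
  by rewrite /K -sumrMnr; apply: eq_bigr => v _; rewrite mulr1n.
have eN : (N%:R : R[i])^-1 *: (e *+ N) = e by rewrite -(scaler_nat N e) scalerA mulVf // scale1r.
have hm : e - y = (N%:R : R[i])^-1 *: ((e - c w) + e *+ K).
  by rewrite /y -[e in LHS]eN -scalerBr; congr (_ *: _); rewrite mulrS addrAC.
have hp' : e + y = (N%:R : R[i])^-1 *:
     (e + \sum_(v | (S v && (v != u)) && (v != w)) (e - c v)).
  rewrite /y -[e in LHS]eN -scalerDr; congr (_ *: _).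
  by rewrite sumrB sumK -/D cwD mulrS addrA.
have KR : \sum_(v | (S v && (v != u)) && (v != w)) (1 : R) = K%:R.
  by rewrite /K natr_sum.
have h1 : nrm (e + y) <= 1.
  rewrite hp' (nrm_scale_invnat HA) mulrC ler_pdivrMr ?ltr0Sn // mul1r.
  apply: (le_trans (nrm_triangle HA _ _)); rewrite /N -nat1r lerD //.
  apply: (le_trans (nrm_sum HA _ _ _)); rewrite -KR.
  by apply: ler_sum => v _.
have h2 : nrm (e - y) <= 1.
  rewrite hm (nrm_scale_invnat HA) mulrC ler_pdivrMr ?ltr0Sn // mul1r.
  apply: (le_trans (nrm_triangle HA _ _)); rewrite /N -nat1r lerD //.
  by rewrite (nrm_scale_nat HA) -[X in _ <= X]mulr1 ler_wpM2l.
have y0 := corner_zero HA ee se sy ey ye h1 h2.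
have cw0 : c w = 0.
  have -> : c w = (N%:R : R[i]) *: y by rewrite /y scalerA mulfV // scale1r.
  by rewrite y0 scaler0.
have [pw spw] := hp w.
have pwe : p w * e = 0.
  apply: (nrm_eq0 HA); apply/eqP; rewrite -sqrf_eq0 -(nrm_cstar HA).
  rewrite (star_mul HA) se spw mulrA -(mulrA e) pw.
  by rewrite -/(c w) cw0 (nrm0 HA).
have := congr1 star pwe; rewrite (star_mul HA) (star0 HA) se spw.
by [].
Qed.

Lemma flipE n (x : vertex n) k j : flip x k j = if j == k then ~~ x j else x j.
Proof. by rewrite ffunE. Qed.

Lemma flipK n (x : vertex n) k : flip (flip x k) k = x.
Proof. by apply/ffunP => j; rewrite !flipE; case: eqP => // _; rewrite negbK. Qed.

Lemma flipC n (x : vertex n) a b : flip (flip x a) b = flip (flip x b) a.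
Proof. by apply/ffunP => j; rewrite !flipE; do 2 case: eqP => //. Qed.

Lemma inU_flip n (x : vertex n) k : inU (flip x k) = ~~ inU x.
Proof.
rewrite /inU /weight negbK.
rewrite (cardsD1 k [set j | flip x k j]) (cardsD1 k [set j | x j]).
have -> : [set j | flip x k j] :\ k = [set j | x j] :\ k.
  by apply/setP => j; rewrite !inE flipE; case: eqP.
rewrite !inE flipE eqxx !oddD.
by case: (x k) => /=; rewrite ?negbK.
Qed.

Lemma inV_inU n (x : vertex n) : inV x = ~~ inU x.
Proof. by rewrite /inU /inV negbK. Qed.

Lemma qn_nonadj (n : nat) (R : realType) (A : algType R[i]) (star : A -> A) (nrm : A -> R)
  (HA : is_Cstar star nrm) (p : vertex n -> A) (Hp : Qn_relations star p) s t :
  inU s != inU t -> (forall k, t != flip s k) -> p s * p t = 0.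
Proof.
case: Hp => hp _ _ hadj; move=> hst hk.
case hs: (inU s); rewrite hs in hst.
  apply: hadj => //; first by rewrite inV_inU; move: hst; case: (inU t).
  by case=> k /eqP; rewrite (negbTE (hk k)).
have ht : inU t by move: hst; case: (inU t).
have h0 : p t * p s = 0.
  apply: hadj => //; first by rewrite inV_inU hs.
  case=> k hsk; have := hk k; by rewrite hsk flipK eqxx.
have := congr1 star h0; rewrite (star_mul HA) (star0 HA) (hp s).2 (hp t).2.
by [].
Qed.

Lemma qn_same (n : nat) (R : realType) (A : algType R[i]) (star : A -> A) (nrm : A -> R)
  (HA : is_Cstar star nrm) (p : vertex n -> A) (Hp : Qn_relations star p) s t :
  inU s = inU t -> s != t -> p s * p t = 0.
Proof.
case: Hp => hp hU hV _; move=> hst neq.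
case hs: (inU s).
  by apply: (proj_orth HA hp hU) => //; rewrite -hst.
apply: (proj_orth HA hp hV) => //; rewrite inV_inU -?hst hs //.
Qed.

Lemma qn_other_sum (n : nat) (R : realType) (A : algType R[i]) (star : A -> A)
  (p : vertex n -> A) (Hp : Qn_relations star p) (z : vertex n) :
  \sum_(v : vertex n | inU v != inU z) p v = 1.
Proof.
case: Hp => _ hU hV _.
case: (inU z).
  rewrite -hV; apply: eq_bigl => v; rewrite inV_inU; by case: (inU v).
rewrite -hU; apply: eq_bigl => v; by case: (inU v).
Qed.

Lemma comb_key n (z : vertex n) a b k j : a != b -> k != a -> k != b ->
  flip z k != flip (flip (flip z a) b) j.
Proof.
move=> ab ka kb; apply/negP => /eqP h.
have hk := congr1 (fun f : vertex n => f k) h; move: hk => /=.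
rewrite !flipE eqxx (negbTE ka) (negbTE kb).
case: (eqVneq k j) => [kj|kj]; last by case: (z k).
subst j => _.
have := congr1 (fun f : vertex n => f a) h; move=> /=.
rewrite !flipE eqxx eq_sym (negbTE ka) (negbTE ab).
by case: (z a).
Qed.

Lemma qn_key (n : nat) (R : realType) (A : algType R[i]) (star : A -> A) (nrm : A -> R)
  (HA : is_Cstar star nrm) (p : vertex n -> A) (Hp : Qn_relations star p)
  (z : vertex n) a b : a != b ->
  p z * p (flip z a) * p (flip (flip z a) b) =
  - (p z * p (flip z b) * p (flip (flip z a) b)).
Proof.
move=> ab; set w := flip (flip z a) b.
have wU : inU w = inU z by rewrite /w !inU_flip negbK.
have wz : z != w.
  apply/negP => /eqP h; have := congr1 (fun f : vertex n => f a) h => /=.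
  by rewrite /w !flipE eqxx (negbTE ab); case: (z a).
have h0 : p z * p w = 0 by apply: (qn_same HA Hp) => //.
have hs := qn_other_sum Hp z.
have : p z * p w = \sum_(v : vertex n | inU v != inU z) p z * p v * p w.
  by rewrite -mulr_suml -mulr_sumr hs mulr1.
have Ta : inU (flip z a) != inU z by rewrite inU_flip; case: (inU z).
have Tb : (inU (flip z b) != inU z) && (flip z b != flip z a).
  rewrite inU_flip; apply/andP; split; first by case: (inU z).
  apply/negP => /eqP h; have := congr1 (fun f : vertex n => f a) h => /=.
  by rewrite !flipE eqxx (negbTE ab); case: (z a).
rewrite (bigD1 (flip z a)) //= (bigD1 (flip z b)) //=.
rewrite big1 ?addr0.
  by rewrite h0 => /esym /eqP; rewrite addr_eq0 => /eqP.
move=> v /andP [/andP [Tv va] vb].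
case: (boolP [exists k, v == flip z k]) => [/existsP [k /eqP vk]|nk].
  have hvw : p v * p w = 0.
    apply: (qn_nonadj HA Hp); first by rewrite wU.
    move=> j; apply/negP => /eqP h.
    have h' : flip z k = flip w j by rewrite h flipK vk.
    suff : flip z k != flip w j by rewrite h' eqxx.
    rewrite /w; apply: comb_key => //.
      by apply: contra va => /eqP ka; rewrite vk ka.
    by apply: contra vb => /eqP kb; rewrite vk kb.
  by rewrite -mulrA hvw mulr0.
have hzv : p z * p v = 0.
  apply: (qn_nonadj HA Hp); first by rewrite eq_sym.
  move=> k; apply: contra nk => /eqP vk; apply/existsP; exists k; by rewrite vk.
by rewrite hzv mul0r.
Qed.

Lemma prod_last (n : nat) (R : realType) (A : algType R[i]) (p : vertex n -> A)
  (hp : forall y, p y * p y = p y) (x : vertex n) (ks : seq 'I_n) :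
  (\prod_(y <- x :: scanl (@flip n) x ks) p y) * p (foldl (@flip n) x ks) =
  \prod_(y <- x :: scanl (@flip n) x ks) p y.
Proof.
elim: ks x => [|k ks IH] x /=; first by rewrite big_cons big_nil mulr1 hp.
by rewrite big_cons -mulrA IH.
Qed.

Unset Implicit Arguments.
Close Scope complex_scope.
Local Open Scope ring_scope.

Theorem lemma3p3 (n : nat) (Hn : (0 < n)%N)
  (R : realType) (A : algType R[i]) (star : A -> A) (nrm : A -> R)
  (HA : is_Cstar star nrm) (p : vertex n -> A) (Hp : Qn_relations star p)
  (x : vertex n) (ks1 ks2 : seq 'I_n) (a b : 'I_n) :
  let mu := path_of x (ks1 ++ a :: b :: ks2) in
  let nu := path_of x (ks1 ++ b :: a :: ks2) in
  (a != b -> p_path p mu = - p_path p nu) /\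
  (a = b -> p_path p mu = p_path p nu).
Proof.
move=> mu nu; split; last by move=> hab; rewrite /mu /nu hab.
move=> ab; rewrite /mu /nu /p_path /path_of !scanl_cat /= -!cat_cons !big_cat !big_cons /=.
set z := foldl (@flip n) x ks1.
rewrite [flip (flip z b) a]flipC.
have hp : forall y, p y * p y = p y by move=> y; case: Hp => h _ _ _; exact: (h y).1.
have pl := prod_last hp x ks1; rewrite big_cons -/z in pl.
rewrite -pl.
have k := qn_key HA Hp z ab.
have k2 : forall P Q : A, P * (p z * p (flip z a) * p (flip (flip z a) b)) * Q =
    - (P * (p z * p (flip z b) * p (flip (flip z a) b)) * Q).
  by move=> P Q; rewrite k mulrN mulNr.
by move: (k2 (p x * \prod_(y <- scanl (@flip n) x ks1) p y)
  (\prod_(y <- scanl (@flip n) (flip (flip z a) b) ks2) p y)); rewrite !mulrA.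
Qed.
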